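(* Let $k$ be a positive integer, let $G$ be a multigraph and let $A\subseteq V(G)$ be nonempty. Then there is a set $X\subseteq E(G)$ with $|X|\le (|A|-1)(k-1)$ that $k$-perfectly separates $A$.
   Context: For vertices $u,v$ of a multigraph $H$, $u\sim_k v$ in $H$ means that either $u=v$ or there are $k$ pairwise edge-disjoint $u$--$v$-paths in $H$. $G-X$ denotes $G$ with the edges of $X$ deleted. An edge set $X$ $k$-perfectly separates $A$ if for all $a,a'\in A$ such that $a\not\sim_k a'$ in $G-X$, the vertices $a$ and $a'$ lie in different components of $G-X$. *)

(* Defs.v *)
From mathcomp Require Import all_boot.
Set Implicit Arguments. Unset Strict Implicit. Unset Printing Implicit Defensive.

(* A finite multigraph: vertex type V, edge type E, and an endpoint map
   [ends : E -> V * V] (parallel edges and loops allowed). *)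

Section Multigraph.
Variables (V E : finType) (ends : E -> V * V).

Definition joins (e : E) (x w : V) : bool :=
  (ends e == (x, w)) || (ends e == (w, x)).

(* A walk from x to v using only edges in F, given as a list of steps
   (edge, next vertex). *)
Fixpoint walk_in (F : {set E}) (x : V) (p : seq (E * V)) (v : V) : bool :=
  match p with
  | [::] => x == v
  | (e, w) :: p' => [&& e \in F, joins e x w & walk_in F w p' v]
  end.

Definition is_path (F : {set E}) (u v : V) (p : seq (E * V)) : bool :=
  walk_in F u p v && uniq (u :: map snd p).

Definition path_edges (p : seq (E * V)) : seq E := map fst p.

Definition simk (F : {set E}) (k : nat) (u v : V) : Prop :=
  u = v \/
  exists ps : 'I_k -> seq (E * V),
    (forall i, is_path F u v (ps i)) /\
    (forall i j, i != j -> [disjoint path_edges (ps i) & path_edges (ps j)]).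

Definition same_comp (F : {set E}) (u v : V) : Prop :=
  exists p, is_path F u v p.

Definition perfectly_separates (k : nat) (X : {set E}) (A : {set V}) : Prop :=
  forall a a', a \in A -> a' \in A ->
    ~ simk (~: X) k a a' -> ~ same_comp (~: X) a a'.

End Multigraph.

(* Main.v *)
Require Import Defs.
From mathcomp Require Import all_boot all_order all_algebra.
From mathcomp Require Import zify.
From Stdlib Require Import Classical.
Set Implicit Arguments. Unset Strict Implicit. Unset Printing Implicit Defensive.
Import GRing.Theory Num.Theory.

Section Menger.
Variables (V E : finType) (ends : E -> V * V).

Definition tl (e : E) (d : bool) : V := if d then (ends e).1 else (ends e).2.
Definition hd (e : E) (d : bool) : V := if d then (ends e).2 else (ends e).1.

Lemma tlN e d : tl e (~~ d) = hd e d. Proof. by case: d. Qed.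
Lemma hdN e d : hd e (~~ d) = tl e d. Proof. by case: d. Qed.

Lemma ends_mem e d d' x : tl e d = x -> (tl e d' == x) || (hd e d' == x).
Proof. by rewrite /tl /hd; case: d; case: d' => <-; rewrite eqxx ?orbT. Qed.

Lemma joins_tl_hd e d : joins ends e (tl e d) (hd e d).
Proof. by rewrite /joins /tl /hd; case: d; case: (ends e) => a b /=; rewrite eqxx ?orbT. Qed.

Definition contrib (oe : option bool) (e : E) (x : V) : int :=
  if oe is Some d then (Posz (tl e d == x) - Posz (hd e d == x))%R else 0%R.

Definition net (o : E -> option bool) (x : V) : int :=
  (\sum_(e : E) contrib (o e) e x)%R.

Definition supp_in (F : {set E}) (o : E -> option bool) :=
  forall e, o e != None -> e \in F.

Definition flow (F : {set E}) o (k : nat) u v :=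
  [/\ supp_in F o, net o u = Posz k, net o v = (- Posz k)%R &
     forall x, x != u -> x != v -> net o x = 0%R].

Definition rstep (F : {set E}) (o : E -> option bool) e d a b : bool :=
  [&& tl e d == a, hd e d == b & ((o e == None) && (e \in F)) || (o e == Some (~~ d))].

Definition resid (F : {set E}) o : rel V := fun a b => [exists e, exists d, rstep F o e d a b].

Definition upd (o : E -> option bool) e d : E -> option bool :=
  fun e' => if e' == e then (if o e == None then Some d else None) else o e'.

Lemma net_upd F o e d a b : rstep F o e d a b -> forall z,
  net (upd o e d) z = (net o z + Posz (a == z) - Posz (b == z))%R.
Proof.
move=> st z; rewrite /net (bigD1 e) //= [in RHS](bigD1 e) //=.
have -> : (\sum_(i | i != e) contrib (upd o e d i) i z =
           \sum_(i | i != e) contrib (o i) i z)%R.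
  by apply: eq_bigr => i /negbTE H; rewrite /upd H.
rewrite /upd eqxx; case/and3P: st => /eqP <- /eqP <-.
case: (o e) => [d'|] /=.
  move=> /eqP [->]; rewrite tlN hdN; set s := (\sum_(i | _) _)%R; lia.
move=> _; set s := (\sum_(i | _) _)%R; lia.
Qed.

Lemma augment F o x p : path (resid F o) x p -> uniq (x :: p) -> supp_in F o ->
  exists o', supp_in F o' /\
   forall z, net o' z = (net o z + Posz (x == z) - Posz (last x p == z))%R.
Proof.
elim: p o x => [|y p IH] o x /=.
  move=> _ _ So; exists o; split => // z; lia.
case/andP => /existsP[e /existsP[d st]] Hp; case/andP => Hx Hu So.
have Hp1 : path (resid F (upd o e d)) y p.
  apply: (@sub_in_path _ (mem (y :: p))) Hp; last by apply/allP.
  move=> a b Ha Hb /existsP[e' /existsP[d' st']].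
  apply/existsP; exists e'; apply/existsP; exists d'.
  case: (eqVneq e' e) => [Ee|ne].
    subst e'; case/and3P: st => /eqP Htl _ _.
    case/and3P: st' => /eqP Ha' /eqP Hb' _.
    have := ends_mem d' Htl; rewrite Ha' Hb' => /orP[] /eqP Hxa;
      by move: Hx; rewrite -Hxa ?Ha ?Hb.
  by move: st'; rewrite /rstep /upd (negbTE ne).
have So1 : supp_in F (upd o e d).
  move=> e'; rewrite /upd; case: (eqVneq e' e) => [->|_]; last exact: So.
  case/and3P: st => _ _; case: (o e) => [d0|] /= H; [by [] | by move: H; rewrite orbF].
have [o' [So' Ho']] := IH _ _ Hp1 Hu So1.
exists o'; split => // z; rewrite Ho' (net_upd st); lia.
Qed.

Lemma sum_ind (R : {set V}) a : (\sum_(x in R) Posz (a == x))%R = Posz (a \in R).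
Proof.
case: (boolP (a \in R)) => H.
  rewrite (bigD1 a) //= eqxx big1 ?addr0 // => x /andP[_ ne].
  by rewrite eq_sym (negbTE ne).
by rewrite big1 // => x Hx; case: eqP => // E'; move: H; rewrite E' Hx.
Qed.

Definition term o (R : {set V}) e : int :=
  if o e is Some d then (Posz (tl e d \in R) - Posz (hd e d \in R))%R else 0%R.

Lemma sum_net o (R : {set V}) :
  (\sum_(x in R) net o x)%R = (\sum_e term o R e)%R.
Proof.
rewrite /net exchange_big /=; apply: eq_bigr => e _.
rewrite /term /contrib; case: (o e) => [d|]; last by rewrite big1.
by rewrite sumrB !sum_ind.
Qed.

Lemma flow_sum F o k u v (R : {set V}) : flow F o k u v -> u \in R -> v \notin R ->
  (\sum_(x in R) net o x)%R = Posz k.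
Proof.
case=> _ Hu _ Hx uR vR; rewrite (bigD1 u) //= big1 ?addr0 // => x /andP[xR ne].
apply: Hx => //; apply: contraNneq vR => <-; exact: xR.
Qed.

Definition cut (F : {set E}) (S : {set V}) :=
  [set e in F | ((ends e).1 \in S) != ((ends e).2 \in S)].

Lemma cut_bound F o k u v : flow F o k u v -> u != v ->
  v \notin [set y | connect (resid F o) u y] ->
  #|cut F [set y | connect (resid F o) u y]| <= k.
Proof.
move=> fl uv vR; set R := [set y | connect (resid F o) u y].
have uR : u \in R by rewrite inE connect0.
have Hs := flow_sum fl uR vR; rewrite sum_net in Hs.
have Ht : forall e, (Posz (e \in cut F R) <= term o R e)%R.
  move=> e; rewrite /term inE.
  have stepR : forall a b, resid F o a b -> a \in R -> b \in R.
    move=> a b ab; rewrite !inE => ua; exact: connect_trans ua (connect1 ab).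
  case He: (o e) => [d|].
    have hdtl : hd e d \in R -> tl e d \in R.
      apply: stepR; apply/existsP; exists e; apply/existsP; exists (~~ d).
      by rewrite /rstep tlN hdN !eqxx He negbK eqxx orbT.
    move: hdtl; rewrite /tl /hd; case: d He => He;
    case: (_ \in R); case: (_ \in R); case: (e \in F) => //=; lia.
  case EF: (e \in F) => /=; last by [].
  have s1 : (ends e).1 \in R -> (ends e).2 \in R.
    by apply: stepR; apply/existsP; exists e; apply/existsP; exists true;
       rewrite /rstep /tl /hd !eqxx He EF.
  have s2 : (ends e).2 \in R -> (ends e).1 \in R.
    by apply: stepR; apply/existsP; exists e; apply/existsP; exists false;
       rewrite /rstep /tl /hd !eqxx He EF.
  move: s1 s2; case: (_ \in R); case: (_ \in R) => //= H1 H2; [by have := H1 isT | by have := H2 isT].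
have : (Posz #|cut F R| <= \sum_e term o R e)%R.
  rewrite -sum1_card big_mkcond /= (big_morph Posz PoszD (erefl (Posz 0))).
  by apply: ler_sum => e _; move: (Ht e); case: (e \in cut F R).
by rewrite Hs lez_nat.
Qed.

Definition dirO (o : E -> option bool) : rel V :=
  fun a b => [exists e, exists d, [&& o e == Some d, tl e d == a & hd e d == b]].

Definition rm (o : E -> option bool) e : E -> option bool :=
  fun e' => if e' == e then None else o e'.

Lemma net_rm o e d z : o e = Some d ->
  net (rm o e) z = (net o z - Posz (tl e d == z) + Posz (hd e d == z))%R.
Proof.
move=> He; rewrite /net (bigD1 e) //= [in RHS](bigD1 e) //=.
have -> : (\sum_(i | i != e) contrib (rm o e i) i z =
           \sum_(i | i != e) contrib (o i) i z)%R.
  by apply: eq_bigr => i /negbTE H; rewrite /rm H.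
rewrite /rm eqxx He /contrib; set s := (\sum_(i | _) _)%R; lia.
Qed.

Lemma remove F o x p : path (dirO o) x p -> uniq (x :: p) -> supp_in F o ->
  exists q o', [/\ walk_in ends F x q (last x p), map snd q = p,
    (forall e, e \in path_edges q -> o e != None /\ o' e = None),
    (forall e, o' e != None -> o e != None) &
    forall z, net o' z = (net o z - Posz (x == z) + Posz (last x p == z))%R].
Proof.
elim: p o x => [|y p IH] o x /=.
  move=> _ _ So; exists [::], o; split; [exact: eqxx|by []|by []|by []|move=> z; lia].
case/andP => /existsP[e /existsP[d /and3P[/eqP He /eqP Htl /eqP Hhd]]] Hp.
case/andP => Hx Hu So.
have Hp1 : path (dirO (rm o e)) y p.
  apply: (@sub_in_path _ (mem (y :: p))) Hp; last by apply/allP.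
  move=> a b Ha Hb /existsP[e' /existsP[d' st']].
  apply/existsP; exists e'; apply/existsP; exists d'.
  case: (eqVneq e' e) => [Ee|ne].
    subst e'; case/and3P: st' => _ /eqP Ha' /eqP Hb'.
    have := ends_mem d' Htl; rewrite Ha' Hb' => /orP[] /eqP Hxa;
      by move: Hx; rewrite -Hxa ?Ha ?Hb.
  by move: st'; rewrite /rm (negbTE ne).
have So1 : supp_in F (rm o e).
  by move=> e'; rewrite /rm; case: (e' == e) => //; apply: So.
have [q [o' [Hw Hm He1 He2 Hn]]] := IH _ _ Hp1 Hu So1.
exists ((e, y) :: q), o'; split => //=.
- rewrite Hw andbT So ?He // -Htl -Hhd; exact: joins_tl_hd.
- by rewrite Hm.
- move=> e0; rewrite inE => /orP[/eqP ->|Hq].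
    split; first by rewrite He.
    by apply/eqP; apply: contraT => /He2; rewrite /rm eqxx.
  have [H1 H2] := He1 _ Hq; split => //; move: H1; rewrite /rm.
  by case: (e0 == e).
- move=> e0 /He2; rewrite /rm; by case: (e0 == e).
- move=> z; rewrite Hn (net_rm z He) Htl Hhd; lia.
Qed.

Lemma find_path F o k u v : flow F o k.+1 u v -> u != v -> connect (dirO o) u v.
Proof.
move=> fl uv; apply: contraT => nc.
set R := [set y | connect (dirO o) u y].
have uR : u \in R by rewrite inE connect0.
have vR : v \notin R by rewrite inE.
have Hs := flow_sum fl uR vR; rewrite sum_net in Hs.
have : (\sum_e term o R e <= 0)%R.
  apply: sumr_le0 => e _; rewrite /term; case He: (o e) => [d|] //.
  have : tl e d \in R -> hd e d \in R.
    rewrite !inE => ut; apply: connect_trans ut (connect1 _).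
    by apply/existsP; exists e; apply/existsP; exists d; rewrite He !eqxx.
  by case: (tl e d \in R); case: (hd e d \in R) => //= /(_ isT).
by rewrite Hs.
Qed.

Lemma disjP (A B : seq E) : (forall e, e \in A -> e \in B -> False) ->
  [disjoint A & B].
Proof.
move=> H; rewrite disjoint_subset; apply/subsetP => e H1; rewrite inE /=.
by apply/negP => H2; apply: (H e).
Qed.

Lemma decomp F u v : u != v -> forall k o, flow F o k u v ->
  exists ps : 'I_k -> seq (E * V),
    [/\ forall i, is_path ends F u v (ps i),
        forall i j, i != j -> [disjoint path_edges (ps i) & path_edges (ps j)] &
        forall i e, e \in path_edges (ps i) -> o e != None].
Proof.
move=> uv; elim=> [|k IH] o fl.
  by exists (fun _ => [::]); split; case.
have := find_path fl uv => /connectP[p Hp Hl].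
case: (shortenP Hp) Hl => p' Hp' Hu' _ Hl.
have [So Hnu Hnv Hnx] := fl.
have [q [o' [Hw Hm He1 He2 Hn]]] := remove Hp' Hu' So.
rewrite -Hl in Hw Hn.
have fl' : flow F o' k u v.
  split.
  - by move=> e /He2 /So.
  - rewrite Hn Hnu eqxx eq_sym (negbTE uv) /=; lia.
  - rewrite Hn Hnv eqxx (negbTE uv) /=; lia.
  - by move=> x xu xv; rewrite Hn Hnx // eq_sym (negbTE xu) eq_sym (negbTE xv); lia.
have [ps' [P1 P2 P3]] := IH _ fl'.
exists (fun i => if unlift ord_max i is Some j then ps' j else q); split.
- move=> i; case: (unliftP ord_max i) => [j _|_]; first exact: P1.
  by rewrite /is_path Hw Hm.
- move=> i j; case: (unliftP ord_max i) => [a ->|->];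
    case: (unliftP ord_max j) => [b ->|->].
  + by rewrite (inj_eq (@lift_inj _ ord_max)); apply: P2.
  + move=> _; rewrite disjoint_sym; apply: disjP => e H1 H2.
    by have := P3 _ _ H2; rewrite (He1 _ H1).2.
  + move=> _; apply: disjP => e H1 H2.
    by have := P3 _ _ H2; rewrite (He1 _ H1).2.
  + by rewrite eqxx.
- move=> i e; case: (unliftP ord_max i) => [j _|_].
    by move/P3/He2.
  by move/He1 => [].
Qed.

Lemma menger_flow F u v : u != v -> forall k,
  (exists o, flow F o k u v) \/
  exists S : {set V}, [/\ u \in S, v \notin S & #|cut F S| < k].
Proof.
move=> uv; elim=> [|k [[o fl]|[S [uS vS cS]]]].
- left; exists (fun _ => None); split => //.
  + by rewrite /net big1.
  + by rewrite /net big1.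
  + by move=> x _ _; rewrite /net big1.
- have [So Hnu Hnv Hnx] := fl.
  case: (boolP (connect (resid F o) u v)) => [/connectP[p Hp Hl]|nc].
    case: (shortenP Hp) Hl => p' Hp' Hu' _ Hl.
    have [o' [So' Hn]] := augment Hp' Hu' So.
    rewrite -Hl in Hn.
    left; exists o'; split => //.
    + rewrite Hn Hnu eqxx eq_sym (negbTE uv) /=; lia.
    + rewrite Hn Hnv eqxx (negbTE uv) /=; lia.
    + by move=> x xu xv; rewrite Hn Hnx // eq_sym (negbTE xu) eq_sym (negbTE xv); lia.
  right; exists [set y | connect (resid F o) u y]; split.
  + by rewrite inE connect0.
  + by rewrite inE.
  + rewrite ltnS; apply: (cut_bound fl uv); by rewrite inE.
- by right; exists S; split => //; apply: ltnW.
Qed.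

Lemma menger F u v k : u != v ->
  simk ends F k u v \/
  exists S : {set V}, [/\ u \in S, v \notin S & #|cut F S| < k].
Proof.
move=> uv; case: (menger_flow F uv k) => [[o fl]|]; last by right.
left; right; have [ps [P1 P2 _]] := decomp uv fl; by exists ps.
Qed.

Definition closed (G : {set E}) (S : {set V}) :=
  forall e, e \in G -> ((ends e).1 \in S) = ((ends e).2 \in S).

Definition inS (S : {set V}) := [set e | ((ends e).1 \in S) && ((ends e).2 \in S)].

Lemma walk_sub (G G' : {set E}) x p y : G \subset G' ->
  walk_in ends G x p y -> walk_in ends G' x p y.
Proof.
move=> /subsetP sG; elim: p x => [|[e w] p IH] x //=.
by case/and3P => /sG -> -> /IH.
Qed.

Lemma joins_mem (G : {set E}) S e x w : closed G S -> e \in G -> joins ends e x w ->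
  (x \in S) = (w \in S) /\ e \in inS S = (x \in S).
Proof.
move=> cG eG; have := cG e eG; rewrite /joins inE.
by case: (ends e) => a b /= Hab /orP[] /eqP [<- <-]; rewrite Hab andbb.
Qed.

Lemma walk_closed (G : {set E}) S x p y : closed G S -> x \in S ->
  walk_in ends G x p y -> walk_in ends (G :&: inS S) x p y /\ y \in S.
Proof.
move=> cG; elim: p x => [|[e w] p IH] x /=.
  by move=> xS /eqP <-.
move=> xS /and3P[eG J Hw].
have [H1 H2] := joins_mem cG eG J.
rewrite H1 in xS; have [IH1 IH2] := IH _ xS Hw.
by rewrite inE eG H2 H1 xS J IH1 IH2.
Qed.

Lemma walk_transfer (G1 G2 : {set E}) S x p y : closed G1 S ->
  G1 :&: inS S \subset G2 -> x \in S ->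
  walk_in ends G1 x p y -> walk_in ends G2 x p y.
Proof.
move=> c s xS /(walk_closed c xS) [H _]; exact: walk_sub s H.
Qed.

Lemma simk_transfer (G1 G2 : {set E}) S k x y : closed G1 S ->
  G1 :&: inS S \subset G2 -> x \in S ->
  simk ends G1 k x y -> simk ends G2 k x y.
Proof.
move=> c s xS [->|[ps [P1 P2]]]; first by left.
right; exists ps; split => // i; have /andP[W U] := P1 i.
by rewrite /is_path U (walk_transfer c s xS W).
Qed.

Lemma comp_transfer (G1 G2 : {set E}) S x y : closed G1 S ->
  G1 :&: inS S \subset G2 -> x \in S ->
  same_comp ends G1 x y -> same_comp ends G2 x y.
Proof.
move=> c s xS [p /andP[W U]]; exists p.
by rewrite /is_path U (walk_transfer c s xS W).
Qed.

Lemma comp_closed (G : {set E}) S x y : closed G S -> x \in S ->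
  same_comp ends G x y -> y \in S.
Proof. by move=> c xS [p /andP[W _]]; have [] := walk_closed c xS W. Qed.

Lemma closed_sub (G G' : {set E}) S : G \subset G' -> closed G' S -> closed G S.
Proof. by move=> /subsetP s c e /s /c. Qed.

Lemma closedC (G : {set E}) S : closed G S -> closed G (~: S).
Proof. by move=> c e /c; rewrite !inE => ->. Qed.

Definition psep (F : {set E}) k (X : {set E}) (A : {set V}) :=
  forall a a', a \in A -> a' \in A ->
    ~ simk ends (F :\: X) k a a' -> ~ same_comp ends (F :\: X) a a'.

Ltac bcases := let x := fresh "x" in apply/subsetP => x; rewrite !inE;
  case: (x \in _); case: (x \in _); case: (x \in _);
  case: ((ends x).1 \in _); case: ((ends x).2 \in _).

Lemma main k : 0 < k -> forall m (A : {set V}) (F : {set E}), #|A| <= m -> A != set0 ->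
  exists X : {set E}, #|X| <= (#|A| - 1) * (k - 1) /\ psep F k X A.
Proof.
move=> k0; elim=> [|m IH] A F hA nA.
  by move: nA; rewrite -card_gt0; lia.
case: (classic (exists a a', [/\ a \in A, a' \in A, ~ simk ends F k a a' &
                               same_comp ends F a a'])) => [|H]; last first.
  exists set0; split; first by rewrite cards0.
  move=> a a' Ha Ha' ns sc; apply: H; exists a, a'; split => //; by rewrite setD0 in ns sc.
move=> [a [a' [Ha Ha' ns sc]]].
have aa' : a != a' by apply/eqP => E'; apply: ns; left.
case: (menger F k aa') => [//|[S [aS a'S cS]]].
set C := cut F S; set F' := F :\: C.
set A1 := A :&: S; set A2 := A :\: S.
have cA := cardsID S A; rewrite -/A1 -/A2 in cA.
have n1 : 0 < #|A1| by apply/card_gt0P; exists a; rewrite inE Ha aS.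
have n2 : 0 < #|A2| by apply/card_gt0P; exists a'; rewrite inE Ha' a'S.
have [X1 [cX1 sX1]] : exists X : {set E}, #|X| <= (#|A1| - 1) * (k - 1) /\ psep F' k X A1.
  apply: IH; [lia | by rewrite -card_gt0].
have [X2 [cX2 sX2]] : exists X : {set E}, #|X| <= (#|A2| - 1) * (k - 1) /\ psep F' k X A2.
  apply: IH; [lia | by rewrite -card_gt0].
exists (C :|: (X1 :&: inS S) :|: (X2 :&: inS (~: S))); split.
  have h1 := (leq_card_setU (C :|: (X1 :&: inS S)) (X2 :&: inS (~: S))).1.
  have h2 := (leq_card_setU C (X1 :&: inS S)).1.
  have h3 := subset_leq_card (subsetIl X1 (inS S)).
  have h4 := subset_leq_card (subsetIl X2 (inS (~: S))).
  have eq : (#|A1| + #|A2| - 1) * (k - 1) =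
     (#|A1| - 1) * (k - 1) + (#|A2| - 1) * (k - 1) + (k - 1).
    move: n1 n2; case: #|A1| => // p1 _; case: #|A2| => // p2 _.
    clear -k0; case: k k0 => // q _; nia.
  rewrite -cA eq.
  move: h1 h2 h3 h4 cX1 cX2 cS.
  set P1 := (#|A1| - 1) * (k - 1); set P2 := (#|A2| - 1) * (k - 1).
  rewrite -/C; lia.
have cF' : closed F' S.
  move=> e; rewrite !inE => /andP[H eF]; move: H; rewrite eF /= negbK.
  by move=> /eqP.
have sub : F :\: (C :|: (X1 :&: inS S) :|: (X2 :&: inS (~: S))) \subset F'.
  by bcases.
have cX := closed_sub sub cF'.
move=> b b' Hb Hb' ns' sc'.
case: (boolP (b \in S)) => bS.
  have b'S := comp_closed cX bS sc'.
  have HA1 : b \in A1 by rewrite inE Hb bS.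
  have HA1' : b' \in A1 by rewrite inE Hb' b'S.
  apply: (sX1 b b' HA1 HA1').
    move=> H; apply: ns'; apply: (simk_transfer (S := S)) H => //.
      exact: closed_sub (subsetDl _ _) cF'.
    by bcases.
  by apply: (comp_transfer (S := S)) sc' => //; bcases.
have bS' : b \in ~: S by rewrite inE.
have cXC := closedC cX.
have b'S := comp_closed cXC bS' sc'.
have HA2 : b \in A2 by rewrite inE Hb andbT.
have HA2' : b' \in A2 by move: b'S; rewrite !inE Hb' andbT.
apply: (sX2 b b' HA2 HA2').
  move=> H; apply: ns'; apply: (simk_transfer (S := ~: S)) H => //.
    exact: closedC (closed_sub (subsetDl _ _) cF').
  by bcases.
by apply: (comp_transfer (S := ~: S)) sc' => //; bcases.
Qed.

End Menger.

Theorem lemma11 (V E : finType) (ends : E -> V * V) (k : nat) (A : {set V}) :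
  0 < k -> A != set0 ->
  exists X : {set E},
    #|X| <= (#|A| - 1) * (k - 1) /\ perfectly_separates ends k X A.
Proof.
move=> k0 nA; have [X [cX sX]] := @main V E ends k k0 #|A| A [set: E] (leqnn _) nA.
exists X; split => // a a' Ha Ha'; have := sX a a' Ha Ha'; by rewrite setTD.
Qed.
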